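(* Fix $\delta>0$ and any sequence $(T_N)_N$ with $T_N\in2\mathbb N$. For every $\varepsilon>0$ there exists $\ell_0=\ell_0(\varepsilon)\in\mathbb N$ such that for every $N\in\mathbb N$, $$\mathbf P^{T_N}_{N,\delta}(\mu_N<N-\ell_0)=\sum_{\ell=\ell_0+1}^{N}\mathbf P^{T_N}_{N,\delta}(\mu_N=N-\ell)\le\varepsilon,$$ where $\mu_N:=\max\{0\le n\le N: S_n\in T_N\mathbb Z\}$.
   Context: $(S_n)_{n\ge0}$ is the simple symmetric random walk on $\mathbb Z$ started at $0$, with law $\mathbf P$. For $T\in2\mathbb N$, $N\in\mathbb N$, $\delta\in\mathbb R$, the polymer measure $\mathbf P^T_{N,\delta}$ is defined by $\frac{d\mathbf P^T_{N,\delta}}{d\mathbf P}(S)=\frac{\exp(\delta\sum_{i=1}^N\mathbf 1_{\{S_i\in T\mathbb Z\}})}{Z^T_{N,\delta}}$, with $Z^T_{N,\delta}$ the normalizing constant. *)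

(* Defs.v *)
From Stdlib Require Import Reals ZArith List.
Import ListNotations.
Open Scope R_scope.

(* A path of the simple random walk up to time N is encoded by its list of
   increments (each +1 or -1); under P all 2^N such lists have prob (1/2)^N. *)
Fixpoint srw_paths (n : nat) : list (list Z) :=
  match n with
  | O => [nil]
  | S m => flat_map (fun p => [(1%Z) :: p; (-1)%Z :: p]) (srw_paths m)
  end.

Definition pos (p : list Z) (n : nat) : Z := fold_right Z.add 0%Z (firstn n p).

Definition inTZ (T : nat) (x : Z) : bool := Z.eqb (Z.modulo x (Z.of_nat T)) 0%Z.

Definition loc_time (T N : nat) (p : list Z) : nat :=
  length (filter (fun i => inTZ T (pos p i)) (seq 1 N)).

Definition rsum {A : Type} (f : A -> R) (l : list A) : R :=
  fold_right Rplus 0 (map f l).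

Definition polymer_mass (T N : nat) (delta : R) (A : list Z -> bool) : R :=
  rsum (fun p => if A p then (/2) ^ N * exp (delta * INR (loc_time T N p)) else 0)
       (srw_paths N).

Definition partition_fn (T N : nat) (delta : R) : R :=
  polymer_mass T N delta (fun _ => true).

Definition polymer_prob (T N : nat) (delta : R) (A : list Z -> bool) : R :=
  polymer_mass T N delta A / partition_fn T N delta.

Definition mu (T N : nat) (p : list Z) : nat :=
  fold_left (fun acc n => if inTZ T (pos p n) then n else acc) (seq 0 (S N)) 0%nat.

(* Main.v *)
Require Import Defs.
From Stdlib Require Import Reals ZArith List Arith.
From Stdlib Require Import Lia Lra.
Import ListNotations.
Import Defs.
Open Scope R_scope.

Lemma rsum_nil {A} (f : A -> R) : rsum f [] = 0.
Proof. reflexivity. Qed.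
Lemma rsum_cons {A} (f : A -> R) x l : rsum f (x :: l) = f x + rsum f l.
Proof. reflexivity. Qed.
Lemma rsum_app {A} (f : A -> R) l1 l2 : rsum f (l1 ++ l2) = rsum f l1 + rsum f l2.
Proof. induction l1; simpl; [unfold rsum; simpl; lra|]. rewrite !rsum_cons in *. rewrite IHl1. lra.
Qed.
Lemma rsum_ext_in {A} (f g : A -> R) l : (forall x, In x l -> f x = g x) -> rsum f l = rsum g l.
Proof. induction l; intros H; [reflexivity|]. rewrite !rsum_cons. rewrite H by (left; auto).
  rewrite IHl; auto. intros; apply H; right; auto. Qed.
Lemma rsum_le_in {A} (f g : A -> R) l : (forall x, In x l -> f x <= g x) -> rsum f l <= rsum g l.
Proof. induction l; intros H; [unfold rsum; simpl; lra|]. rewrite !rsum_cons.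
  apply Rplus_le_compat; [apply H; left; auto| apply IHl; intros; apply H; right; auto]. Qed.
Lemma rsum_plus {A} (f g : A -> R) l : rsum (fun x => f x + g x) l = rsum f l + rsum g l.
Proof. induction l; [unfold rsum; simpl; lra|]. rewrite !rsum_cons, IHl. lra. Qed.
Lemma rsum_scal {A} (c : R) (f : A -> R) l : rsum (fun x => c * f x) l = c * rsum f l.
Proof. induction l; [unfold rsum; simpl; lra|]. rewrite !rsum_cons, IHl. lra. Qed.
Lemma rsum_const {A} (c : R) (l : list A) : rsum (fun _ => c) l = c * INR (length l).
Proof. induction l; [unfold rsum; simpl; lra|]. rewrite rsum_cons, IHl. simpl length.
  rewrite S_INR. lra. Qed.
Lemma rsum_nonneg {A} (f : A -> R) l : (forall x, In x l -> 0 <= f x) -> 0 <= rsum f l.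
Proof. intros H. replace 0 with (rsum (fun _ : A => 0) l). apply rsum_le_in; auto.
  rewrite rsum_const; lra. Qed.
Lemma rsum_swap {A B} (f : A -> B -> R) la lb :
  rsum (fun a => rsum (fun b => f a b) lb) la = rsum (fun b => rsum (fun a => f a b) la) lb.
Proof. induction la; simpl.
  - unfold rsum at 1; simpl. symmetry. replace (fun b : B => rsum (fun a : A => f a b) []) with (fun _ : B => 0).
    rewrite rsum_const; lra. reflexivity.
  - rewrite rsum_cons, IHla. rewrite <- rsum_plus. apply rsum_ext_in. intros. rewrite rsum_cons. lra.
Qed.
Lemma rsum_flat_map {A B} (f : B -> R) (g : A -> list B) l :
  rsum f (flat_map g l) = rsum (fun x => rsum f (g x)) l.
Proof. induction l; [reflexivity|]. simpl. rewrite rsum_app, IHl, rsum_cons. reflexivity. Qed.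

Lemma srw_S n f : rsum f (srw_paths (S n)) = rsum (fun p => f (1%Z :: p) + f ((-1)%Z :: p)) (srw_paths n).
Proof. simpl. rewrite rsum_flat_map. apply rsum_ext_in. intros. rewrite !rsum_cons. unfold rsum; simpl; lra. Qed.

Lemma srw_len n p : In p (srw_paths n) -> length p = n.
Proof. revert p; induction n; simpl; intros p H.
  - destruct H as [<-|[]]; reflexivity.
  - apply in_flat_map in H. destruct H as [q [Hq H]]. simpl in H.
    destruct H as [<-|[<-|[]]]; simpl; f_equal; auto. Qed.

Lemma srw_length n : length (srw_paths n) = (2 ^ n)%nat.
Proof. induction n; [reflexivity|]. simpl. rewrite length_flat_map.
  assert (H : forall l : list (list Z), list_sum (map (fun p => length [(1%Z)::p; (-1)%Z::p]) l) = (2 * length l)%nat).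
  { induction l; simpl. reflexivity. simpl in IHl. rewrite IHl. lia. }
  rewrite H, IHn. simpl. reflexivity. Qed.

Lemma decomp n m f : rsum f (srw_paths (n + m)) =
  rsum (fun a => rsum (fun b => f (a ++ b)) (srw_paths m)) (srw_paths n).
Proof. revert f; induction n; intros f.
  - simpl plus. change (srw_paths 0) with [@nil Z]. rewrite rsum_cons, rsum_nil, Rplus_0_r. reflexivity.
  - simpl plus. rewrite srw_S, IHn, srw_S. apply rsum_ext_in. intros. rewrite <- rsum_plus. reflexivity.
Qed.

Lemma pos_app a b i : pos (a ++ b) i = (pos a i + pos b (i - length a))%Z.
Proof. unfold pos. rewrite firstn_app, fold_right_app.
  generalize (firstn (i - length a) b); intro l.
  generalize (firstn i a); intro l'. induction l'; simpl; lia. Qed.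

Lemma pos_0 p : pos p 0 = 0%Z.
Proof. reflexivity. Qed.

Lemma pos_full a i : (length a <= i)%nat -> pos a i = pos a (length a).
Proof. intros H. unfold pos. rewrite firstn_all2 by lia. rewrite firstn_all2 by lia. reflexivity. Qed.

Lemma inTZ_0 T : inTZ T 0 = true.
Proof. unfold inTZ. rewrite Zmod_0_l. reflexivity. Qed.

Lemma inTZ_add T x y : (0 < T)%nat -> inTZ T x = true -> inTZ T (x + y) = inTZ T y.
Proof. unfold inTZ. intros HT Hx. apply Z.eqb_eq in Hx.
  rewrite Z.add_mod by lia. rewrite Hx, Z.add_0_l, Z.mod_mod by lia. reflexivity. Qed.

Lemma count_shift (P : nat -> bool) s k m :
  length (filter P (seq (s + k) m)) = length (filter (fun j => P (s + j)%nat) (seq k m)).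
Proof. revert k; induction m; intros k; [reflexivity|]. simpl.
  replace (S (s + k)) with (s + S k)%nat by lia. destruct (P (s + k)%nat); simpl; rewrite IHm; reflexivity.
Qed.

Lemma loc_split T n m a b : length a = n ->
  loc_time T (n + m) (a ++ b) =
  (loc_time T n a + length (filter (fun j => inTZ T (pos a n + pos b j)) (seq 1 m)))%nat.
Proof. intros Ha. unfold loc_time. rewrite seq_app, filter_app, length_app. f_equal.
  - f_equal. apply filter_ext_in. intros i Hi. apply in_seq in Hi.
    rewrite pos_app. replace (i - length a)%nat with 0%nat by lia.
    rewrite pos_0, Z.add_0_r. reflexivity.
  - replace (1 + n)%nat with (n + 1)%nat by lia. rewrite count_shift. f_equal. apply filter_ext.
    intros j. rewrite pos_app. replace (n + j - length a)%nat with j by lia.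
    rewrite (pos_full a (n+j)) by lia. rewrite Ha. reflexivity.
Qed.

Lemma mu_spec T N p : (mu T N p <= N)%nat /\ inTZ T (pos p (mu T N p)) = true /\
  forall k, (mu T N p < k <= N)%nat -> inTZ T (pos p k) = false.
Proof. unfold mu. induction N.
  - cbn [seq fold_left]. rewrite pos_0, inTZ_0. simpl. split; [lia|split; [rewrite pos_0; apply inTZ_0|intros; lia]].
  - rewrite seq_S, fold_left_app.
    set (r := fold_left _ (seq 0 (S N)) 0%nat) in *. simpl fold_left. replace (0 + S N)%nat with (S N) by lia.
    destruct IHN as [H1 [H2 H3]].
    destruct (inTZ T (pos p (S N))) eqn:E.
    + split; [lia|split; [exact E|intros; lia]].
    + split; [lia|split; [exact H2|]]. intros k Hk. destruct (Nat.eq_dec k (S N)).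
      * subst; exact E.
      * apply H3; lia.
Qed.

Lemma filter_all_false {A} (f : A -> bool) l : (forall x, In x l -> f x = false) -> filter f l = [].
Proof. induction l; intros H; [reflexivity|]. simpl. rewrite H by (left; auto). apply IHl.
  intros; apply H; right; auto. Qed.

Definition Aw T n delta := rsum (fun a => if inTZ T (pos a n) then (/2)^n * exp (delta * INR (loc_time T n a)) else 0) (srw_paths n).

Lemma pos_app_n a b n j : length a = n -> pos (a ++ b) (n + j) = (pos a n + pos b j)%Z.
Proof. intros Ha. rewrite pos_app, (pos_full a (n+j)) by lia. rewrite Ha. f_equal. f_equal. lia. Qed.

Lemma mass_le T n m delta : polymer_mass T (n+m) delta (fun p => Nat.eqb (mu T (n+m) p) n) <= Aw T n delta.
Proof. unfold polymer_mass, Aw. rewrite decomp. apply rsum_le_in. intros a Ha. apply srw_len in Ha.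
  apply Rle_trans with (rsum (fun b => if inTZ T (pos a n) then (/2)^(n+m) * exp (delta * INR (loc_time T n a)) else 0) (srw_paths m)).
  - apply rsum_le_in. intros b Hb. destruct (Nat.eqb_spec (mu T (n+m) (a++b)) n) as [E|E].
    + destruct (mu_spec T (n+m) (a++b)) as [_ [H2 H3]]. rewrite E in H2, H3.
      rewrite pos_app, Ha, Nat.sub_diag, pos_0, Z.add_0_r in H2. rewrite H2.
      rewrite loc_split by auto. rewrite filter_all_false. simpl length. rewrite Nat.add_0_r. lra.
      intros j Hj. apply in_seq in Hj. rewrite <- pos_app_n by auto. apply H3. lia.
    + destruct (inTZ T (pos a n)); [|lra]. apply Rmult_le_pos. apply pow_le; lra. apply Rlt_le, exp_pos.
  - rewrite rsum_const, srw_length, pow_INR. destruct (inTZ T (pos a n)); [|lra].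
    rewrite pow_add. replace (INR 2) with 2 by (simpl; lra).
    replace ((/ 2) ^ n * (/ 2) ^ m * exp (delta * INR (loc_time T n a)) * 2 ^ m) with
      ((/ 2) ^ n * exp (delta * INR (loc_time T n a)) * ((/2) ^ m * 2 ^ m)) by ring.
    rewrite <- Rpow_mult_distr, Rinv_l, pow1 by lra. lra.
Qed.

Lemma Z_ge T n m delta : (0 < T)%nat -> Aw T n delta * partition_fn T m delta <= partition_fn T (n+m) delta.
Proof. intros HT. unfold partition_fn, polymer_mass, Aw. rewrite decomp.
  rewrite Rmult_comm, <- rsum_scal. apply rsum_le_in. intros a Ha. apply srw_len in Ha.
  destruct (inTZ T (pos a n)) eqn:E.
  - rewrite Rmult_comm, <- rsum_scal. apply Req_le. apply rsum_ext_in. intros b _.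
    rewrite loc_split by auto. erewrite filter_ext by (intros j; apply inTZ_add; auto).
    fold (loc_time T m b). rewrite plus_INR, Rmult_plus_distr_l, exp_plus, pow_add. ring.
  - rewrite Rmult_0_r. apply rsum_nonneg. intros. apply Rmult_le_pos. apply pow_le; lra. apply Rlt_le, exp_pos.
Qed.

Definition E n (f : list Z -> R) := rsum (fun p => (/2)^n * f p) (srw_paths n).

Lemma E_const n c : E n (fun _ => c) = c.
Proof. unfold E. rewrite rsum_const, srw_length, pow_INR. replace (INR 2) with 2 by (simpl; lra).
  replace ((/ 2) ^ n * c * 2 ^ n) with (c * ((/2)^n * 2^n)) by ring.
  rewrite <- Rpow_mult_distr, Rinv_l, pow1 by lra. ring. Qed.
Lemma E_plus n f g : E n (fun p => f p + g p) = E n f + E n g.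
Proof. unfold E. rewrite <- rsum_plus. apply rsum_ext_in. intros; ring. Qed.
Lemma E_scal n c f : E n (fun p => c * f p) = c * E n f.
Proof. unfold E. rewrite <- rsum_scal. apply rsum_ext_in. intros; ring. Qed.
Lemma E_le n f g : (forall p, In p (srw_paths n) -> f p <= g p) -> E n f <= E n g.
Proof. intros H. unfold E. apply rsum_le_in. intros. apply Rmult_le_compat_l. apply pow_le; lra. auto. Qed.
Lemma E_ext n f g : (forall p, In p (srw_paths n) -> f p = g p) -> E n f = E n g.
Proof. intros H. unfold E. apply rsum_ext_in. intros. rewrite H; auto. Qed.

Lemma E_S n f : E (S n) f = E n (fun a => (f (a ++ [1%Z]) + f (a ++ [(-1)%Z])) / 2).
Proof. unfold E. rewrite <- Nat.add_1_r, decomp. apply rsum_ext_in. intros a _.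
  change (srw_paths 1) with [[1%Z]; [(-1)%Z]]. rewrite !rsum_cons, rsum_nil. rewrite pow_add. field. Qed.

Lemma pos_last a n x : length a = n -> pos (a ++ [x]) (S n) = (pos a n + x)%Z.
Proof. intros Ha. rewrite <- Nat.add_1_r, pos_app_n by auto. unfold pos at 2. simpl. lia. Qed.

Lemma s2_eq n : E n (fun p => IZR (pos p n) ^ 2) = INR n.
Proof. induction n.
  - rewrite (E_ext 0 _ (fun _ => 0)). rewrite E_const. reflexivity. intros. rewrite pos_0. simpl; ring.
  - rewrite E_S. rewrite (E_ext n _ (fun a => IZR (pos a n) ^ 2 + 1)).
    rewrite E_plus, E_const, IHn, S_INR. ring.
    intros a Ha. apply srw_len in Ha. rewrite !pos_last by auto. rewrite !plus_IZR. simpl (IZR (-1)). field.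
Qed.

Lemma s4_eq n : E n (fun p => IZR (pos p n) ^ 4) = 3 * INR n ^ 2 - 2 * INR n.
Proof. induction n.
  - rewrite (E_ext 0 _ (fun _ => 0)). rewrite E_const. simpl; ring. intros. rewrite pos_0. simpl; ring.
  - rewrite E_S. rewrite (E_ext n _ (fun a => IZR (pos a n) ^ 4 + 6 * IZR (pos a n) ^ 2 + 1)).
    rewrite !E_plus, E_scal, E_const, IHn, s2_eq, S_INR. ring.
    intros a Ha. apply srw_len in Ha. rewrite !pos_last by auto. rewrite !plus_IZR. simpl (IZR (-1)). field.
Qed.

Definition Zc n p := length (filter (fun i => Z.eqb (pos p i) 0) (seq 0 n)).

Lemma abs_step s : IZR (Z.abs (s + 1)) + IZR (Z.abs (s + -1)) = 2 * IZR (Z.abs s) + 2 * (if Z.eqb s 0 then 1 else 0).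
Proof. rewrite <- !plus_IZR. destruct (Z.eqb_spec s 0).
  - subst. simpl. lra.
  - replace (Z.abs (s + 1) + Z.abs (s + -1))%Z with (2 * Z.abs s)%Z by lia. rewrite mult_IZR. simpl. lra.
Qed.

Lemma Zc_last a n x : length a = n -> Zc (S n) (a ++ [x]) = (Zc n a + (if Z.eqb (pos a n) 0 then 1 else 0))%nat.
Proof. intros Ha. unfold Zc. rewrite seq_S, filter_app, length_app. f_equal.
  - f_equal. apply filter_ext_in. intros i Hi. apply in_seq in Hi. rewrite pos_app.
    replace (i - length a)%nat with 0%nat by lia. rewrite pos_0, Z.add_0_r. reflexivity.
  - simpl. rewrite pos_app, Ha, Nat.sub_diag, pos_0, Z.add_0_r. destruct (pos a n =? 0)%Z; reflexivity.
Qed.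

Lemma tanaka n : E n (fun p => IZR (Z.abs (pos p n))) = E n (fun p => INR (Zc n p)).
Proof. induction n.
  - apply E_ext. intros. rewrite pos_0. reflexivity.
  - rewrite !E_S.
    rewrite (E_ext n _ (fun a => IZR (Z.abs (pos a n)) + (if Z.eqb (pos a n) 0 then 1 else 0))).
    rewrite (E_ext n (fun a => (INR (Zc (S n) (a ++ [1%Z])) + INR (Zc (S n) (a ++ [(-1)%Z]))) / 2)
       (fun a => INR (Zc n a) + (if Z.eqb (pos a n) 0 then 1 else 0))).
    rewrite !E_plus, IHn. reflexivity.
    + intros a Ha. apply srw_len in Ha. rewrite !Zc_last by auto. rewrite !plus_INR.
      destruct (pos a n =? 0)%Z; simpl; field.
    + intros a Ha. apply srw_len in Ha. rewrite !pos_last by auto. rewrite abs_step. field.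
Qed.

Lemma count_mono {A} (f g : A -> bool) l : (forall x, f x = true -> g x = true) ->
  (length (filter f l) <= length (filter g l))%nat.
Proof. intros H. induction l; [simpl; lia|]. simpl. destruct (f a) eqn:Ef.
  - rewrite (H a Ef). simpl. lia.
  - destruct (g a); simpl; lia. Qed.

Lemma Zc_le T n p : (Zc n p <= 1 + loc_time T n p)%nat.
Proof. unfold Zc, loc_time. destruct n; [simpl; lia|].
  change (seq 0 (S n)) with (0%nat :: seq 1 n). rewrite seq_S. rewrite filter_app, length_app.
  simpl filter at 1. destruct (pos p 0 =? 0)%Z; simpl length.
  - assert (length (filter (fun i => (pos p i =? 0)%Z) (seq 1 n)) <= length (filter (fun i => inTZ T (pos p i)) (seq 1 n)))%nat.
    { apply count_mono. intros x Hx. apply Z.eqb_eq in Hx. rewrite Hx. apply inTZ_0. } lia.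
  - assert (length (filter (fun i => (pos p i =? 0)%Z) (seq 1 n)) <= length (filter (fun i => inTZ T (pos p i)) (seq 1 n)))%nat.
    { apply count_mono. intros x Hx. apply Z.eqb_eq in Hx. rewrite Hx. apply inTZ_0. } lia.
Qed.

Lemma jensen n g : exp (E n g) <= E n (fun p => exp (g p)).
Proof. set (a := E n g).
  apply Rle_trans with (E n (fun p => exp a * (1 + (g p - a)))).
  - rewrite E_scal, E_plus, E_const. replace (E n (fun p => g p - a)) with 0. lra.
    unfold Rminus. rewrite E_plus, E_const. fold a. ring.
  - apply E_le. intros p _. replace (exp (g p)) with (exp a * exp (g p - a)).
    apply Rmult_le_compat_l. apply Rlt_le, exp_pos. apply exp_ineq1_le.
    rewrite <- exp_plus. f_equal; ring.
Qed.

Lemma pw_ineq x M : 0 < M -> x ^ 2 <= M * Rabs x + x ^ 4 / M ^ 2.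
Proof. intros HM. set (y := Rabs x). assert (Hy : 0 <= y) by apply Rabs_pos.
  assert (Hx2 : x ^ 2 = y ^ 2). { unfold y. rewrite pow2_abs. reflexivity. }
  assert (Hx4 : x ^ 4 = (y ^ 2) ^ 2). { rewrite <- Hx2. ring. }
  rewrite Hx4, Hx2. destruct (Rle_lt_dec y M).
  - assert (y^2 <= M * y) by nra. assert (0 <= (y^2)^2 / M^2).
    { apply Rmult_le_pos. apply pow2_ge_0. apply Rlt_le, Rinv_0_lt_compat. nra. } lra.
  - assert (M^2 <= y^2) by nra. assert (y^2 <= (y^2)^2 / M^2).
    { apply Rmult_le_reg_r with (M^2). nra. unfold Rdiv. rewrite Rmult_assoc, Rinv_l by nra. nra. }
    nra.
Qed.

Lemma exp_ge4 y : 0 <= y -> (y / 4) ^ 4 <= exp y.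
Proof. intros Hy. replace y with (y/4 + y/4 + y/4 + y/4) at 2 by field.
  rewrite !exp_plus. assert (H := exp_ineq1_le (y/4)). assert (0 <= y/4) by lra.
  assert (y/4 <= exp (y/4)) by lra.
  replace (exp (y/4) * exp (y/4) * exp (y/4) * exp (y/4)) with (exp (y/4) ^ 4) by ring.
  apply pow_incr; lra.
Qed.

Lemma Z_lower T n delta : (0 < T)%nat -> 0 < delta -> (1 <= n)%nat ->
  exp (- delta) * delta ^ 4 * INR n ^ 2 / 147456 <= partition_fn T n delta.
Proof. intros HT Hd Hn.
  set (e := E n (fun p => IZR (Z.abs (pos p n)))).
  assert (He0 : 0 <= e). { unfold e. rewrite <- (E_const n 0). apply E_le. intros. apply IZR_le. lia. }
  assert (HN : 1 <= INR n) by (apply (le_INR 1); lia).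
  set (M := sqrt (6 * INR n)).
  assert (HM2 : M * M = 6 * INR n) by (apply sqrt_sqrt; lra).
  assert (HM : 0 < M) by (apply sqrt_lt_R0; lra).
  assert (Hineq : INR n <= M * e + (3 * INR n ^ 2 - 2 * INR n) / M ^ 2).
  { rewrite <- (s2_eq n) at 1. unfold e. rewrite <- E_scal.
    replace ((3 * INR n ^ 2 - 2 * INR n) / M ^ 2) with (/ M^2 * (3 * INR n ^ 2 - 2 * INR n)) by (unfold Rdiv; ring).
    rewrite <- s4_eq, <- E_scal, <- E_plus. apply E_le. intros p _. rewrite abs_IZR.
    replace (/ M ^ 2 * IZR (pos p n) ^ 4) with (IZR (pos p n) ^ 4 / M ^ 2) by (unfold Rdiv; ring).
    apply pw_ineq; auto. }
  assert (Hq : (3 * INR n ^ 2 - 2 * INR n) / M ^ 2 <= INR n / 2).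
  { replace (M ^ 2) with (6 * INR n) by (rewrite <- HM2; ring).
    apply Rmult_le_reg_r with (6 * INR n). lra. unfold Rdiv. rewrite Rmult_assoc, Rinv_l by lra. nra. }
  assert (He : M * e >= INR n / 2) by lra.
  assert (He2 : e ^ 2 >= INR n / 24).
  { assert ((M * e) ^ 2 >= (INR n / 2) ^ 2) by nra.
    replace ((M*e)^2) with (M * M * e ^ 2) in H by ring. rewrite HM2 in H. nra. }
  assert (He4 : e ^ 4 >= INR n ^ 2 / 576).
  { replace (e ^ 4) with ((e^2)^2) by ring. nra. }
  assert (HZ : partition_fn T n delta = E n (fun p => exp (delta * INR (loc_time T n p)))).
  { unfold partition_fn, polymer_mass, E. apply rsum_ext_in. intros; reflexivity. }
  rewrite HZ. eapply Rle_trans; [|apply jensen]. rewrite E_scal.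
  assert (HL : e - 1 <= E n (fun p => INR (loc_time T n p))).
  { unfold e. rewrite tanaka. replace (E n (fun p => INR (loc_time T n p))) with
      (E n (fun p => 1 + INR (loc_time T n p)) - 1) by (rewrite E_plus, E_const; ring).
    apply Rplus_le_compat_r. apply E_le. intros p _.
    replace (1 + INR (loc_time T n p)) with (INR (1 + loc_time T n p)%nat) by (rewrite plus_INR; simpl; ring).
    apply le_INR. apply Zc_le. }
  apply Rle_trans with (exp (delta * (e - 1))).
  2: { apply Rlt_le in Hd. destruct (Rle_lt_or_eq_dec _ _ (Rmult_le_compat_l _ _ _ Hd HL)) as [h|h].
       apply Rlt_le, exp_increasing, h. rewrite h; lra. }
  replace (delta * (e - 1)) with (- delta + delta * e) by ring. rewrite exp_plus.
  replace (exp (- delta) * delta ^ 4 * INR n ^ 2 / 147456) with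
    (exp (- delta) * (delta ^ 4 * (INR n ^ 2 / 576) / 256)) by field.
  apply Rmult_le_compat_l. apply Rlt_le, exp_pos.
  eapply Rle_trans; [|apply exp_ge4; nra].
  replace ((delta * e / 4) ^ 4) with (delta ^ 4 * e ^ 4 / 256) by field.
  apply Rmult_le_compat_r. lra. apply Rmult_le_compat_l. apply pow_le; lra. lra.
Qed.

Lemma exists_nat r : exists l0, (1 <= l0)%nat /\ r <= INR l0.
Proof. destruct (archimed r) as [H1 H2]. exists (S (Z.to_nat (up r))). split; [lia|].
  rewrite S_INR. destruct (Z_le_gt_dec 0 (up r)).
  - rewrite INR_IZR_INZ, Z2Nat.id by auto. lra.
  - assert (IZR (up r) <= -1) by (apply IZR_le; lia). pose proof (pos_INR (Z.to_nat (up r))). lra.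
Qed.

Lemma ind_sum x N w : (x <= N)%nat -> forall k a, (1 <= a)%nat -> (a + k <= N + 1)%nat ->
  rsum (fun l => if Nat.eqb x (N - l) then w else 0) (seq a k) =
  if (Nat.leb a (N - x) && Nat.ltb (N - x) (a + k))%bool then w else 0.
Proof. intros Hx k. induction k; intros a Ha Hk.
  - simpl. rewrite rsum_nil. destruct (Nat.leb_spec a (N - x)); destruct (Nat.ltb_spec (N - x) (a + 0)); simpl; try lra; lia.
  - simpl seq. rewrite rsum_cons, IHk by lia.
    destruct (Nat.eqb_spec x (N - a)); destruct (Nat.leb_spec a (N - x)); destruct (Nat.ltb_spec (N - x) (a + S k));
    destruct (Nat.leb_spec (S a) (N - x)); destruct (Nat.ltb_spec (N - x) (S a + k)); simpl; try lra; lia.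
Qed.

Lemma telescope C k a : 0 <= C -> (1 <= a)%nat ->
  rsum (fun l => C / INR l ^ 2) (seq (S a) k) <= C / INR a - C / INR (a + k).
Proof. intros HC. revert a. induction k; intros a Ha.
  - simpl. rewrite rsum_nil, Nat.add_0_r. lra.
  - simpl seq. rewrite rsum_cons. specialize (IHk (S a) ltac:(lia)).
    replace (a + S k)%nat with (S a + k)%nat by lia.
    assert (HA : 1 <= INR a) by (apply (le_INR 1); lia). rewrite S_INR in *.
    assert (C / (INR a + 1) ^ 2 <= C / INR a - C / (INR a + 1)).
    { replace (C / INR a - C / (INR a + 1)) with (C * / (INR a * (INR a + 1))) by (field; lra).
      unfold Rdiv. apply Rmult_le_compat_l; auto. apply Rinv_le_contravar. nra. nra. }
    lra.
Qed.

Lemma prob_bound T N l delta : (0 < T)%nat -> (l <= N)%nat -> 0 < partition_fn T l delta -> 0 < partition_fn T N delta ->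
  polymer_prob T N delta (fun p => Nat.eqb (mu T N p) (N - l)) <= / partition_fn T l delta.
Proof. intros HT Hl HZl HZN. set (n := (N - l)%nat). assert (HN : N = (n + l)%nat) by (unfold n; lia).
  clearbody n. subst N. replace (n + l - l)%nat with n by lia.
  unfold polymer_prob. pose proof (mass_le T n l delta). pose proof (Z_ge T n l delta HT).
  assert (Aw T n delta <= partition_fn T (n + l) delta / partition_fn T l delta).
  { apply Rmult_le_reg_r with (partition_fn T l delta); auto. unfold Rdiv.
    rewrite Rmult_assoc, Rinv_l by lra. lra. }
  apply Rmult_le_reg_r with (partition_fn T (n + l) delta); auto. unfold Rdiv.
  rewrite Rmult_assoc, Rinv_l by lra. unfold Rdiv in H1. lra.
Qed.

Theorem mainTheorem17 (delta : R) (Tseq : nat -> nat)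
  (hdelta : 0 < delta)
  (hT : forall N, (0 < Tseq N)%nat /\ Nat.Even (Tseq N)) :
  forall eps : R, 0 < eps ->
  exists l0 : nat, forall N : nat,
    polymer_prob (Tseq N) N delta (fun p => Nat.ltb (mu (Tseq N) N p) (N - l0))
      = rsum (fun l => polymer_prob (Tseq N) N delta
                         (fun p => Nat.eqb (mu (Tseq N) N p) (N - l)))
             (seq (S l0) (N - l0))
    /\
    polymer_prob (Tseq N) N delta (fun p => Nat.ltb (mu (Tseq N) N p) (N - l0))
      <= eps.
Proof.
  intros eps Heps.
  set (c := exp (- delta) * delta ^ 4 / 147456).
  assert (Hc : 0 < c). { unfold c. apply Rmult_lt_0_compat; [|lra]. apply Rmult_lt_0_compat. apply exp_pos. apply pow_lt; lra. }
  set (C := / c).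
  assert (HC : 0 < C) by (apply Rinv_0_lt_compat; auto).
  destruct (exists_nat (C / eps)) as [l0 [Hl0 Hl0']].
  exists l0. intros N. set (T := Tseq N). assert (HT : (0 < T)%nat) by apply hT.
  assert (Zlow : forall m, (1 <= m)%nat -> c * INR m ^ 2 <= partition_fn T m delta).
  { intros m Hm. eapply Rle_trans; [|apply Z_lower; auto]. unfold c. right; field. }
  assert (Zpos : forall m, (1 <= m)%nat -> 0 < partition_fn T m delta).
  { intros m Hm. eapply Rlt_le_trans; [|apply Zlow; auto]. apply Rmult_lt_0_compat; auto.
    apply pow_lt. apply (lt_INR 0); lia. }
  assert (Heq : polymer_prob T N delta (fun p => Nat.ltb (mu T N p) (N - l0))
      = rsum (fun l => polymer_prob T N delta (fun p => Nat.eqb (mu T N p) (N - l))) (seq (S l0) (N - l0))).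
  { unfold polymer_prob. unfold Rdiv. rewrite (rsum_ext_in _ (fun l => / partition_fn T N delta * polymer_mass T N delta (fun p => Nat.eqb (mu T N p) (N - l))))
      by (intros; ring). rewrite rsum_scal, Rmult_comm. f_equal.
    unfold polymer_mass. rewrite rsum_swap. apply rsum_ext_in. intros p _.
    destruct (mu_spec T N p) as [Hmu _].
    destruct (Nat.lt_ge_cases l0 N).
    - rewrite ind_sum by lia.
      destruct (Nat.ltb_spec (mu T N p) (N - l0)); destruct (Nat.leb_spec (S l0) (N - mu T N p));
      destruct (Nat.ltb_spec (N - mu T N p) (S l0 + (N - l0))); simpl; try reflexivity; lia.
    - replace (N - l0)%nat with 0%nat by lia. simpl seq. rewrite rsum_nil.
      destruct (Nat.ltb_spec (mu T N p) 0); [lia|reflexivity]. }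
  split; [exact Heq|]. rewrite Heq.
  apply Rle_trans with (rsum (fun l => C / INR l ^ 2) (seq (S l0) (N - l0))).
  - apply rsum_le_in. intros l Hl. apply in_seq in Hl.
    eapply Rle_trans; [apply prob_bound; auto; try lia; apply Zpos; lia|].
    unfold C, Rdiv. rewrite <- Rinv_mult. apply Rinv_le_contravar.
    apply Rmult_lt_0_compat; auto. apply pow_lt. apply (lt_INR 0); lia. apply Zlow; lia.
  - eapply Rle_trans; [apply telescope; [lra|lia]|].
    assert (0 <= C / INR (l0 + (N - l0))).
    { destruct (Nat.eq_dec (l0 + (N - l0)) 0) as [E|E]. rewrite E. simpl. unfold Rdiv; rewrite Rinv_0; lra.
      apply Rmult_le_pos; [lra|]. apply Rlt_le, Rinv_0_lt_compat, (lt_INR 0); lia. }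
    assert (C / INR l0 <= eps).
    { assert (HL : 0 < INR l0) by (apply (lt_INR 0); lia).
      apply Rmult_le_reg_r with (INR l0); auto. unfold Rdiv. rewrite Rmult_assoc, Rinv_l by lra.
      apply Rmult_le_reg_r with (/ eps). apply Rinv_0_lt_compat; auto.
      rewrite Rmult_1_r. replace (eps * INR l0 * / eps) with (INR l0) by (field; lra). exact Hl0'. }
    lra.
Qed.
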